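(* Let $\succ=(\succ_s)_{s\in S}$ be a priority profile in which every $\succ_s$ is a weak order on $I$. Then $$f^{\succ}\subseteq\bigcup_{\succ'\in\mathcal{E}^c(\succ)}f^{\succ'},$$ i.e., every student optimal stable matching for $\succ$ is the (unique) student optimal stable matching for some extension profile obtained via a single tiebreaking rule.
   Context: A weak order on $I$ is an asymmetric, transitive and negatively transitive ($(x,y)\notin B$ and $(y,z)\notin B$ imply $(x,z)\notin B$) relation; a total order is a complete weak order. School choice setup: $I$ is a finite set of students with $|I|\ge 3$, $S$ a finite set of schools. Each student $i$ has a total order $P_i$ on $S\cup\{\emptyset\}$; $sR_is'$ means $sP_is'$ or $s=s'$. Each school $s$ has capacity $q_s\in\mathbb{Z}_{++}$ and an asymmetric priority relation $\succ_s$ on $I$. A matching $\mu$ assigns each $i$ to $\mu(i)\in S\cup\{\emptyset\}$, $\mu(s)=\{i:\mu(i)=s\}$, $|\mu(s)|\le q_s$. $\mu$ is stable for $\succ$ if individually rational ($\mu(i)R_i\emptyset$), non-wasteful ($sP_i\mu(i)$ implies $|\mu(s)|=q_s$) and fair (no $s$, $j\in\mu(s)$, $i\notin\mu(s)$ with $sR_i\mu(i)$ and $(i,j)\in\succ_s$). Pareto dominance: $\mu'(i)R_i\mu(i)$ for all $i$, strict for some $i$. An SOSM for $\succ$ is a stable matching not Pareto dominated by any stable matching; $f^\succ$ is the set of SOSMs. Maximal set: $M(I',\succ_s)=\{i\in I':(j,i)\notin\succ_s\ \forall j\in I'\setminus\{i\}\}$. For bijections $r_s:I\to\{1,\dots,|I|\}$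 and $\tau=(r_s)_{s\in S}$, the $\tau$ tiebreaking SMO algorithm constructs, for each $s$, a total order $\succ'_s: i_1\,i_2\cdots i_{|I|}$ (meaning $(i_t,i_{t'})\in\succ'_s$ iff $t<t'$) where at step $t=1,\dots,|I|$, $i_t$ is the element of $M(I\setminus\{i_1,\dots,i_{t-1}\},\succ_s)$ with smallest $r_s$-value. $\tau$ is a single tiebreaking rule if $r_s=r_{s'}$ for all $s,s'\in S$. $\mathcal{E}^c(\succ)$ is the set of profiles $(\succ'_s)_{s\in S}$ obtained by the $\tau$ tiebreaking SMO algorithm for some single tiebreaking rule $\tau$. *)

(* Defs.v *)
(* School choice: students I, schools S (finTypes);
   "no school" (the empty assignment) is [None : option S]. *)
From mathcomp Require Import all_boot.
Set Implicit Arguments. Unset Strict Implicit. Unset Printing Implicit Defensive.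

Section SchoolChoice.
Variables (I S : finType).

Definition asymmetric {T : Type} (B : rel T) := forall x y, B x y -> ~~ B y x.
Definition transitive_rel {T : Type} (B : rel T) := forall x y z, B x y -> B y z -> B x z.
Definition neg_transitive {T : Type} (B : rel T) :=
  forall x y z, ~~ B x y -> ~~ B y z -> ~~ B x z.
Definition weak_order {T : Type} (B : rel T) :=
  [/\ asymmetric B, transitive_rel B & neg_transitive B].
Definition complete_rel {T : eqType} (B : rel T) := forall x y, x != y -> B x y \/ B y x.
Definition total_order {T : eqType} (B : rel T) := weak_order B /\ complete_rel B.

Definition Rpref (P : I -> rel (option S)) (i : I) (a b : option S) : bool :=
  P i a b || (a == b).

Definition assigned (mu : I -> option S) (s : S) : {set I} :=
  [set i | mu i == Some s].

Definition is_matching (q : S -> nat) (mu : I -> option S) : Prop :=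
  forall s, #|assigned mu s| <= q s.

Definition stable (P : I -> rel (option S)) (q : S -> nat) (pr : S -> rel I)
  (mu : I -> option S) : Prop :=
  [/\ is_matching q mu,
      forall i, Rpref P i (mu i) None,
      forall i s, P i (Some s) (mu i) -> #|assigned mu s| = q s &
      ~ (exists s i j, [/\ j \in assigned mu s, i \notin assigned mu s,
                          Rpref P i (Some s) (mu i) & pr s i j])].

Definition pareto_dominates (P : I -> rel (option S)) (mu' mu : I -> option S) : Prop :=
  (forall i, Rpref P i (mu' i) (mu i)) /\ (exists i, P i (mu' i) (mu i)).

(* SOSM: stable and not Pareto dominated by any stable matching;
   [is_SOSM P q pr mu] means mu ∈ f^pr. *)
Definition is_SOSM (P : I -> rel (option S)) (q : S -> nat) (pr : S -> rel I)
  (mu : I -> option S) : Prop :=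
  stable P q pr mu /\
  ~ (exists mu', stable P q pr mu' /\ pareto_dominates P mu' mu).

Definition maxset (A : {set I}) (B : rel I) : {set I} :=
  [set i in A | [forall j in A, (j != i) ==> ~~ B j i]].

Fixpoint smo_seq (r : I -> nat) (B : rel I) (n : nat) (A : {set I}) : seq I :=
  match n with
  | 0 => [::]
  | n'.+1 =>
      match [pick i in maxset A B | [forall j in maxset A B, r i <= r j]] with
      | Some i => i :: smo_seq r B n' (A :\ i)
      | None => [::]
      end
  end.

Definition smo_order (r : I -> nat) (B : rel I) : rel I :=
  fun i j => index i (smo_seq r B #|I| [set: I]) < index j (smo_seq r B #|I| [set: I]).

Definition ranking (r : I -> nat) : Prop :=
  injective r /\ (forall i, 1 <= r i <= #|I|).

Definition single_tiebreak (r : I -> nat) (pr : S -> rel I) : S -> rel I :=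
  fun s => smo_order r (pr s).

End SchoolChoice.

(* Main.v *)
Require Import Defs.
From mathcomp Require Import all_boot.
Set Implicit Arguments. Unset Strict Implicit. Unset Printing Implicit Defensive.

Section Gen.
Variables (I : finType) (r : I -> nat) (B : rel I).

Lemma smo_sub n (A : {set I}) : {subset smo_seq r B n A <= A}.
Proof.
elim: n A => [|n IH] A /=; first by [].
case: pickP => [k /andP[Hk _]|_] //.
move=> x; rewrite inE => /orP[/eqP->|/IH].
- by move: Hk; rewrite inE => /andP[].
- by rewrite in_setD1 => /andP[].
Qed.

Lemma smo_uniq n (A : {set I}) : uniq (smo_seq r B n A).
Proof.
elim: n A => [|n IH] A /=; first by [].
case: pickP => [k _|_] //=.
rewrite IH andbT; apply/negP => /smo_sub; by rewrite in_setD1 eqxx.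
Qed.

Lemma smo_cover (Hex : forall A' : {set I}, A' != set0 -> exists k, k \in Defs.maxset A' B)
  n (A : {set I}) : #|A| <= n -> {subset A <= smo_seq r B n A}.
Proof.
elim: n A => [|n IH] A HA x xA.
  by move: HA; rewrite leqn0 cards_eq0 => /eqP A0; rewrite A0 inE in xA.
have ne : A != set0 by apply/set0Pn; exists x.
have [k0 Hk0] := Hex A ne.
rewrite /=; case: pickP => [k /andP[Hk Hmin] | Hnone].
  rewrite inE; case: (eqVneq x k) => [->|xk] //=.
  have kA : k \in A by move: Hk; rewrite inE => /andP[].
  apply: IH; last by rewrite in_setD1 xk.
  by move: HA; rewrite (cardsD1 k) kA.
exfalso.
case: (@arg_minnP _ k0 (fun k => k \in Defs.maxset A B) r Hk0) => m Hm Hmm.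
move: (Hnone m); rewrite Hm /= => /negP; apply.
by apply/forallP => l; apply/implyP => Hl; exact: Hmm.
Qed.

Lemma smo_index n (A : {set I}) i j :
  (forall A' : {set I}, i \in A' -> j \in A' -> i != j -> i \in Defs.maxset A' B ->
     [forall l in Defs.maxset A' B, r i <= r l] -> False) ->
  i \in A -> j \in A -> index j (smo_seq r B n A) <= index i (smo_seq r B n A).
Proof.
move=> H; elim: n A => [|n IH] A iA jA /=; first by [].
case: pickP => [k /andP[Hk Hmin]|_] //=.
case: (eqVneq k j) => [->|kj]; first by [].
case: (eqVneq k i) => [ki|ki].
  subst k; exfalso; exact: (H A iA jA kj Hk Hmin).
rewrite ltnS; apply: IH; by rewrite in_setD1 ?iA ?jA eq_sym ?ki ?kj.
Qed.

Lemma maxset_ne : asymmetric B -> transitive_rel B ->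
  forall A : {set I}, A != set0 -> exists k, k \in Defs.maxset A B.
Proof.
move=> Has Htr A /set0Pn [i0 i0A].
case: (@arg_minnP _ i0 (fun i => i \in A) (fun i => #|[set k in A | B k i]|) i0A) => m mA Hm.
exists m; rewrite inE mA /=.
apply/forallP => k; apply/implyP => kA; apply/implyP => km; apply/negP => Bkm.
have := Hm k kA; rewrite leqNgt => /negP; apply; apply: proper_card.
apply/properP; split.
  apply/subsetP => x; rewrite !inE => /andP[-> Bxk] /=; exact: Htr Bxk Bkm.
exists k; first by rewrite inE kA Bkm.
rewrite inE kA /=; apply/negP => Bkk; move: (Has _ _ Bkk); by rewrite Bkk.
Qed.

End Gen.

Section Main.
Variables (I S : finType) (P : I -> rel (option S)) (q : S -> nat) (pr : S -> rel I).
Hypothesis HP : forall i, total_order (P i).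
Hypothesis Hpr : forall s, weak_order (pr s).

Lemma Pirr i a : ~~ P i a a.
Proof. case: (HP i) => [[Has _ _] _]; apply/negP => H; by move: (Has _ _ H); rewrite H. Qed.

Lemma Ptr i a b c : P i a b -> P i b c -> P i a c.
Proof. case: (HP i) => [[_ Htr _] _]; exact: Htr. Qed.

Lemma PRtr i a b c : P i a b -> Rpref P i b c -> P i a c.
Proof. move=> H1 /orP[H2|/eqP<-] //; exact: Ptr H1 H2. Qed.

Lemma Rtr i a b c : Rpref P i a b -> Rpref P i b c -> Rpref P i a c.
Proof.
move=> /orP[H1|/eqP->] // H2; apply/orP; left; exact: PRtr H1 H2.
Qed.

Lemma prNtr s x y z : ~~ pr s x y -> ~~ pr s y z -> ~~ pr s x z.
Proof. case: (Hpr s) => [_ _ H]; exact: H. Qed.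

Definition envy (mu : I -> option S) (i j : I) : bool :=
  [exists s, (mu j == Some s) && P i (Some s) (mu i) && ~~ pr s j i].

Lemma envy_irr mu i : ~~ envy mu i i.
Proof.
apply/negP => /existsP [s /andP[/andP[/eqP E H] _]]; by move: H; rewrite E (negbTE (Pirr _ _)).
Qed.

Lemma improve (mu : I -> option S) (C : {set I}) (f : I -> I) :
  stable P q pr mu ->
  (forall x, x \in C -> envy mu x (f x)) ->
  f @: C = C -> {in C &, injective f} -> C != set0 ->
  stable P q pr (fun x => if x \in C then mu (f x) else mu x) /\
  pareto_dominates P (fun x => if x \in C then mu (f x) else mu x) mu.
Proof.
move=> [Hm HIR HNW Hfair] Henv fCC finj Cn.
set mu' := fun x => _.
have HPC x : x \in C -> P x (mu' x) (mu x).
  move=> xC; rewrite /mu' xC.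
  by case/existsP: (Henv x xC) => s /andP[/andP[/eqP -> H] _].
have HR x : Rpref P x (mu' x) (mu x).
  case xC: (x \in C); first by apply/orP; left; exact: HPC.
  by rewrite /mu' xC; apply/orP; right.
have Hcard s : #|assigned mu' s| = #|assigned mu s|.
  rewrite -(cardsID C (assigned mu' s)) -(cardsID C (assigned mu s)).
  congr (_ + _).
    rewrite -(card_in_imset (f := f)); last first.
      by move=> x y /setIP[_ xC] /setIP[_ yC]; exact: finj.
    apply: eq_card => y; apply/imsetP/setIP.
      move=> [x /setIP[xa xC] ->]; split; last by rewrite -fCC; apply/imsetP; exists x.
      by move: xa; rewrite !inE /mu' xC.
    move=> [ya yC]; move: (yC) ya; rewrite -{1}fCC => /imsetP [x xC ->] ya.
    exists x => //; apply/setIP; split => //; by rewrite !inE /mu' xC in ya *.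
  apply: eq_card => y; rewrite !inE /mu'; by case: (y \in C).
split; last first.
  split; first exact: HR.
  by case/set0Pn: Cn => x xC; exists x; exact: HPC.
split.
- by move=> s; rewrite Hcard.
- move=> i; exact: Rtr (HR i) (HIR i).
- move=> i s H; rewrite Hcard; apply: HNW; exact: PRtr H (HR i).
- move=> [s [i [j [ja ia Ri prij]]]].
  have Hi : P i (Some s) (mu' i).
    case/orP: Ri => // /eqP E; move: ia; by rewrite inE -E eqxx.
  have Hi' : P i (Some s) (mu i) by exact: PRtr Hi (HR i).
  have ia' : i \notin assigned mu s.
    rewrite inE; apply/negP => /eqP E; by move: Hi'; rewrite E (negbTE (Pirr _ _)).
  have Ri' : Rpref P i (Some s) (mu i) by apply/orP; left.
  move: ja; rewrite inE /mu'; case jC: (j \in C) => /eqP ja.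
    case/existsP: (Henv j jC) => s' /andP[/andP[/eqP E _] Hn].
    move: E; rewrite ja => -[Es]; subst s'.
    have prif : pr s i (f j).
      apply/negPn/negP => H; move: (prNtr H Hn); by rewrite prij.
    apply: Hfair; exists s, i, (f j); split => //; by rewrite inE ja.
  apply: Hfair; exists s, i, j; split => //; by rewrite inE ja.
Qed.

End Main.

Section Main3.
Variables (I S : finType) (P : I -> rel (option S)) (q : S -> nat) (pr : S -> rel I).
Hypothesis HP : forall i, total_order (P i).
Hypothesis Hpr : forall s, weak_order (pr s).

Lemma no_cycle mu : is_SOSM P q pr mu ->
  forall A : {set I}, A != set0 -> exists k, k \in Defs.maxset A (fun k j => envy P pr mu j k).
Proof.
move=> [Hst Hnd] A An.
case: (boolP (Defs.maxset A (fun k j => envy P pr mu j k) == set0)) => [/eqP M0 | /set0Pn //].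
exfalso.
pose f i := odflt i [pick j in A | envy P pr mu i j].
have Hf i : i \in A -> f i \in A /\ envy P pr mu i (f i).
  move=> iA; rewrite /f; case: pickP => [j /andP[jA e]|Hn] //=.
  exfalso.
  have : i \notin Defs.maxset A (fun k j => envy P pr mu j k) by rewrite M0 inE.
  rewrite inE iA /= => /forallPn [j].
  rewrite !negb_imply => /andP[jA /andP[_ e]].
  by move: (Hn j) e; rewrite jA /=; case: (envy P pr mu i j).
pose Pc (C : {set I}) := [&& C \subset A, C != set0 & f @: C \subset C].
have PA : Pc A.
  rewrite /Pc subxx An /=; apply/subsetP => y /imsetP [x xA ->]; exact: (Hf x xA).1.
case: (@arg_minnP _ A Pc (fun C => #|C|) PA) => C /and3P[CA Cn fC] Cmin.
have fCC : f @: C = C.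
  apply/eqP; rewrite eqEcard fC /=; apply: Cmin.
  rewrite /Pc (subset_trans fC CA) imsetS //= andbT.
  case/set0Pn: Cn => x xC; apply/set0Pn; exists (f x); exact: imset_f.
have finj : {in C &, injective f} by apply/imset_injP; rewrite fCC.
have Henv x : x \in C -> envy P pr mu x (f x).
  move=> xC; exact: (Hf x (subsetP CA x xC)).2.
have [H1 H2] := improve HP Hpr Hst Henv fCC finj Cn.
apply: Hnd; eexists; split; [exact: H1 | exact: H2].
Qed.

End Main3.
Unset Implicit Arguments. Set Strict Implicit.

Theorem corollary4 (I S : finType) (P : I -> rel (option S)) (q : S -> nat)
  (pr : S -> rel I) :
  3 <= #|I| ->
  (forall i, total_order (P i)) ->
  (forall s, 0 < q s) ->
  (forall s, weak_order (pr s)) ->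
  forall mu : I -> option S,
    is_SOSM P q pr mu ->
    exists r : I -> nat, ranking r /\ is_SOSM P q (single_tiebreak r pr) mu.
Proof.
move=> _ HP _ Hpr mu Hs.
have Hex := no_cycle HP Hpr Hs.
pose Bv := fun k j => envy P pr mu j k.
pose t := smo_seq (fun _ => 0) Bv #|I| [set: I].
have tcov : forall x, x \in t.
  move=> x; apply: (@smo_cover _ (fun _ => 0) Bv Hex #|I| [set: I]); [by rewrite cardsT | exact: in_setT].
have tuniq : uniq t by exact: smo_uniq.
pose r := fun i => (index i t).+1.
have Henvr i j : envy P pr mu i j -> r j < r i.
  move=> e; rewrite /r ltnS.
  have le : index j t <= index i t.
    apply: smo_index; [|exact: in_setT|exact: in_setT].
    move=> A' iA jA ij Hmax _.
    rewrite inE in Hmax; case/andP: Hmax => _ /forallP /(_ j).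
    by rewrite jA eq_sym ij /= /Bv e.
  rewrite ltn_neqAle le andbT; apply/negP => /eqP E.
  have ji := index_inj i (tcov j) (tcov i) E; subst j.
  by move: e; apply/negP; apply: envy_irr.
have Hcov s : forall x, x \in smo_seq r (pr s) #|I| [set: I].
  move=> x; apply: smo_cover; [|by rewrite cardsT | exact: in_setT].
  case: (Hpr s) => Has Htr _; exact: maxset_ne.
have Hfwd s i j : pr s i j -> single_tiebreak r pr s i j.
  move=> prij; rewrite /single_tiebreak /smo_order.
  have ij : i != j.
    apply/negP => /eqP E; subst j; case: (Hpr s) => Has _ _.
    by move: (Has _ _ prij); rewrite prij.
  have le : index i (smo_seq r (pr s) #|I| [set: I]) <= index j (smo_seq r (pr s) #|I| [set: I]).
    apply: smo_index; [|exact: in_setT|exact: in_setT].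
    move=> A' jA iA ji Hmax _.
    rewrite inE in Hmax; case/andP: Hmax => _ /forallP /(_ i).
    by rewrite iA ij /= prij.
  rewrite ltn_neqAle le andbT; apply/negP => /eqP E.
  have := index_inj i (Hcov s i) (Hcov s j) E; by move/eqP; rewrite (negbTE ij).
exists r; split.
  split.
    move=> x y; rewrite /r => -[E]; exact: (index_inj x (tcov x) (tcov y) E).
  move=> i; apply/andP; split => //; rewrite /r.
  apply: leq_trans (max_card (mem t)).
  by rewrite (card_uniqP tuniq) index_mem tcov.
case: (Hs) => [[Hm HIR HNW Hfair] Hnd].
split; last first.
  move=> [mu' [[Hm' HIR' HNW' Hfair'] Hdom]]; apply: Hnd; exists mu'; split => //.
  split => // [[s [i [j [ja ia Ri prij]]]]]; apply: Hfair'.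
  exists s, i, j; split => //; exact: Hfwd.
split => // [[s [i [j [ja ia Ri Hij]]]]].
have nprij : ~~ pr s i j.
  apply/negP => prij; apply: Hfair; exists s, i, j; by split.
have Pi : P i (Some s) (mu i).
  case/orP: Ri => // /eqP E; move: ia; by rewrite inE -E eqxx.
have ij : i != j.
  apply/negP => /eqP E; subst j; by rewrite ja in ia.
move: Hij; rewrite /single_tiebreak /smo_order; apply/negP; rewrite -leqNgt.
case: (boolP (pr s j i)) => prji.
  apply: smo_index; [|exact: in_setT|exact: in_setT].
  move=> A' iA jA _ Hmax _.
  rewrite inE in Hmax; case/andP: Hmax => _ /forallP /(_ j).
  by rewrite jA eq_sym ij /= prji.
have e : envy P pr mu i j.
  apply/existsP; exists s; rewrite prji Pi andbT andbT.
  by rewrite inE in ja.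
have rji := Henvr i j e.
apply: smo_index; [|exact: in_setT|exact: in_setT].
move=> A' iA jA _ Hmax Hmin.
have jmax : j \in Defs.maxset A' (pr s).
  rewrite inE jA /=; apply/forallP => k; apply/implyP => kA; apply/implyP => kj.
  apply/negP => prkj.
  have prki : pr s k i.
    apply/negPn/negP => nki; move: (prNtr Hpr nki nprij); by rewrite prkj.
  rewrite inE in Hmax; case/andP: Hmax => _ /forallP /(_ k).
  rewrite kA prki /= => /negP; apply; apply/negP => /eqP ki; subst k.
  by rewrite prkj in nprij.
move/forallP: Hmin => /(_ j); rewrite jmax /= => H.
by move: rji; rewrite ltnNge H.
Qed.
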